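(* Let $p,q$ be positive integers with $2\le p/q<4$, let $f$ be a $(p,q)$-colouring of a graph $G$, and let $v$ be a vertex lying on a directed cycle of $D_f$ (i.e. in a nontrivial strongly connected component of $D_f$). Then $v$ is fixed: for every $(p,q)$-colouring $h$ obtainable from $f$ by a sequence of single-vertex recolourings (each intermediate map being a $(p,q)$-colouring), $h(v)=f(v)$.
   Context: A $(p,q)$-colouring of $G$ is a map $f:V(G)\to\{0,\dots,p-1\}$ with $q\le|f(u)-f(v)|\le p-q$ for every edge $uv$. $D_f$ is the digraph on $V(G)$ with an arc $\overrightarrow{xy}$ whenever $xy\in E(G)$ and $f(y)-f(x)\equiv q\pmod p$ (for $p=2q$ each edge yields a directed 2-cycle). *)

(* Defs.v *)
From mathcomp Require Import all_boot.
From Stdlib Require Import Relation_Operators.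
Set Implicit Arguments. Unset Strict Implicit. Unset Printing Implicit Defensive.

Definition simple_graph (T : finType) (e : rel T) : Prop :=
  symmetric e /\ irreflexive e.

Definition absdiff (a b : nat) : nat := maxn a b - minn a b.

Definition pq_colouring (T : finType) (e : rel T) (p q : nat) (f : T -> nat) : Prop :=
  (forall v, f v < p) /\
  (forall u v, e u v -> q <= absdiff (f u) (f v) <= p - q).

Definition Df_arc (T : finType) (e : rel T) (p q : nat) (f : T -> nat) : rel T :=
  fun x y => e x y && (f y == f x + q %[mod p]).

Definition on_directed_cycle (T : finType) (e : rel T) (p q : nat) (f : T -> nat)
  (v : T) : Prop :=
  exists y, Df_arc e p q f v y /\ connect (Df_arc e p q f) y v.

Definition recolour_step (T : finType) (e : rel T) (p q : nat) (g h : T -> nat) : Prop :=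
  pq_colouring e p q g /\ pq_colouring e p q h /\
  exists w, forall u, u != w -> g u = h u.

Definition reconfigurable (T : finType) (e : rel T) (p q : nat) (g h : T -> nat) : Prop :=
  clos_refl_trans (T -> nat) (@recolour_step T e p q) g h.

(* Main.v *)
Require Import Defs.
From mathcomp Require Import all_boot.
From Stdlib Require Import Relation_Operators.
From mathcomp Require Import zify.

Lemma arith (p q a b c d : nat) : 0 < q -> 2 * q <= p < 4 * q ->
  a < p -> b < p -> c < p -> d < p ->
  b = a + q %[mod p] -> c = b + q %[mod p] ->
  q <= maxn a d - minn a d <= p - q -> q <= maxn d c - minn d c <= p - q -> d = b.
Proof.
move=> ? ? Ha Hb Hc ? E1 E2 ? ?. rewrite (modn_small Hb) in E1. rewrite (modn_small Hc) in E2.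
have [h|h] := ltnP (a + q) p.
  rewrite (modn_small h) in E1.
  have [h'|h'] := ltnP (b + q) p.
    rewrite (modn_small h') in E2. lia.
  rewrite -(subnK h') modnDr modn_small in E2; lia.
rewrite -(subnK h) modnDr modn_small in E1; last lia.
have [h'|h'] := ltnP (b + q) p.
  rewrite (modn_small h') in E2. lia.
rewrite -(subnK h') modnDr modn_small in E2; lia.
Qed.

Theorem lemma2p8 (T : finType) (e : rel T) (p q : nat)
  (Hgraph : simple_graph e) (Hq : 0 < q) (Hp : 0 < p)
  (Hratio : 2 * q <= p < 4 * q)
  (f : T -> nat) (Hf : pq_colouring e p q f)
  (v : T) (Hv : on_directed_cycle e p q f v) :
  forall h : T -> nat, pq_colouring e p q h -> reconfigurable e p q f h -> h v = f v.
Proof.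
set D := Df_arc e p q f.
set S := fun u => connect D v u && connect D u v.
have [_ Hirr] := Hgraph.
case: Hv => y0 [Hvy0 Hy0v].
have noloop : forall u, ~~ D u u.
  by move=> u; rewrite /D /Df_arc Hirr.
have succ : forall u, S u -> exists y, D u y /\ S y.
  move=> u /andP [Hvu Huv].
  case: (eqVneq u v) => [->|neq].
    exists y0; split=> //; apply/andP; split=> //.
    exact: (connect_trans (connect1 Hvy0) (connect0 _ _)).
  case/connectP: Huv => [[|y pp] Hpath Hlast]; first by rewrite /= in Hlast; rewrite Hlast eqxx in neq.
  move: Hpath => /= /andP [Huy Hpy].
  exists y; split=> //; apply/andP; split.
    exact: (connect_trans Hvu (connect1 Huy)).
  by apply/connectP; exists pp.
have pred : forall u, S u -> exists x, D x u /\ S x.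
  move=> u /andP [Hvu Huv].
  have gen : forall z, connect D v z -> connect D z u -> z != u -> exists x, D x u /\ S x.
    move=> z Hvz /connectP [pp Hpath Hlast] neq.
    case/lastP: pp Hpath Hlast => [|pp' w]; first by move=> _ /= E; rewrite E eqxx in neq.
    rewrite rcons_path last_rcons => /andP [Hp1 Hx] Ew.
    rewrite -Ew in Hx.
    exists (last z pp'); split=> //; apply/andP; split.
      apply: (connect_trans Hvz); apply/connectP; exists pp' => //.
    exact: (connect_trans (connect1 Hx) Huv).
  case: (eqVneq u v) => [Euv|neq].
    apply: (gen y0); first exact: connect1.
      by rewrite Euv.
    apply/negP => /eqP E; move: Hvy0; rewrite E -Euv => H.
    by move: H; rewrite /Df_arc Hirr.
  by apply: (gen v) => //; rewrite eq_sym.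
have key : forall g h, reconfigurable e p q g h ->
    (forall u, S u -> g u = f u) -> (forall u, S u -> h u = f u).
  move=> g h; elim=> {g h}.
  - move=> g h [Hg [Hh [w Hw]]] Hgf u Su.
    case: (eqVneq u w) => [Euw|neq]; last by rewrite -Hw // Hgf.
    subst u.
    have [x [Dxw Sx]] := pred w Su.
    have [y [Dwy Sy]] := succ w Su.
    move: Dxw Dwy => /andP [exw /eqP Ex] /andP [ewy /eqP Ey].
    have xnw : x != w by apply/negP => /eqP E; rewrite E Hirr in exw.
    have ynw : y != w by apply/negP => /eqP E; rewrite E Hirr in ewy.
    have hx : h x = f x by rewrite -(Hw x xnw) Hgf.
    have hy : h y = f y by rewrite -(Hw y ynw) Hgf.
    case: Hf => Hfp _. case: Hh => Hhp Hhe.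
    have := Hhe _ _ exw; have := Hhe _ _ ewy.
    rewrite /absdiff hx hy => H1 H2.
    exact: (@arith p q (f x) (f w) (f y) (h w) Hq Hratio (Hfp x) (Hfp w) (Hfp y) (Hhp w) Ex Ey H2 H1).
  - by [].
  - move=> g h k _ IH1 _ IH2 H; apply: IH2; exact: IH1.
move=> h Hh Hr; apply: (key f h Hr) => //.
apply/andP; split; first exact: connect0.
exact: (connect_trans (connect1 Hvy0) Hy0v).
Qed.
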